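(* Let $R>0$ and, for $d\ge0$, $r\ge0$, $$f(d,r)=\begin{cases}2r/R^2,&r\le R-d,\\0,&r>R+d\text{ or }r<d-R,\\\frac{2r}{\pi R^2}\arccos\Big(\frac{d^2+r^2-R^2}{2dr}\Big),&\text{otherwise.}\end{cases}$$ Then for any $d\ge0$ the function $f(d,\cdot)$ is concave on its support intersected with $[R,\infty)$. If in addition $d\ge R$, then $f(d,\cdot)$ is concave on its full support $[d-R,d+R]$.
   Context: $f(d,r)$ is the derivative in $r$ of $|B_r(0)\cap B_R(\mathbf{y})|/(\pi R^2)$ for $|\mathbf{y}|=d$ (the one-particle profile). *)

(* Defs.v *)
From Stdlib Require Import Reals Lra.
Open Scope R_scope.

Definition f_prof (RR d r : R) : R :=
  if Rle_dec r (RR - d) then 2 * r / RR ^ 2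
  else if Rlt_dec (RR + d) r then 0
  else if Rlt_dec r (d - RR) then 0
  else 2 * r / (PI * RR ^ 2) * acos ((d ^ 2 + r ^ 2 - RR ^ 2) / (2 * d * r)).

Definition prof_support (RR d r : R) : Prop :=
  0 <= r /\ d - RR <= r /\ r <= d + RR.

Definition concave_on (S : R -> Prop) (g : R -> R) : Prop :=
  forall x y t, S x -> S y -> 0 <= t <= 1 ->
    t * g x + (1 - t) * g y <= g (t * x + (1 - t) * y).

(* Main.v *)
Require Import Defs.
From Stdlib Require Import Reals Lra Psatz.
From Coquelicot Require Import Coquelicot.
Open Scope R_scope.

Lemma mvt_strict f df a b : a < b -> (forall c, a<c<b -> is_derive f c (df c)) ->
  (forall c, a<=c<=b -> continuity_pt f c) ->
  exists c, a<c<b /\ f b - f a = df c * (b-a).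
Proof.
intros Hab Hd Hc.
assert (pr1 : forall c, a<c<b -> derivable_pt f c).
{ intros c Hc'. exists (df c). apply is_derive_Reals; auto. }
destruct (MVT f id a b pr1 (fun c _ => derivable_pt_id c) Hab Hc
  (fun c _ => derivable_continuous_pt id c (derivable_pt_id c))) as [c [P HP]].
exists c; split; auto.
rewrite derive_pt_id in HP.
rewrite (derive_pt_eq_0 f c (df c) (pr1 c P)) in HP.
2:{ apply is_derive_Reals; auto. }
unfold id in HP. lra.
Qed.

Lemma mono_from_deriv h1 h2 a b :
  (forall c, a<c<b -> is_derive h1 c (h2 c)) -> (forall c, a<c<b -> h2 c <= 0) ->
  forall x y, a<x -> x<=y -> y<b -> h1 y <= h1 x.
Proof.
intros Hd Hn x y Hx Hxy Hy.
destruct (Req_dec x y) as [->|Hne]; [lra|].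
destruct (mvt_strict h1 h2 x y) as [c [Hc E]]; try lra.
- intros c Hc; apply Hd; lra.
- intros c Hc. apply derivable_continuous_pt. exists (h2 c). apply is_derive_Reals, Hd; lra.
- assert (h2 c <= 0) by (apply Hn; lra). nra.
Qed.

Lemma concave_core h h1 a b :
 (forall c, a<=c<=b -> continuity_pt h c) ->
 (forall c, a<c<b -> is_derive h c (h1 c)) ->
 (forall x y, a<x -> x<=y -> y<b -> h1 y <= h1 x) ->
 forall x y t, a<=x -> x<y -> y<=b -> 0<t<1 -> t*h x + (1-t)*h y <= h (t*x+(1-t)*y).
Proof.
intros Hc Hd Hm x y t Hx Hxy Hy Ht.
set (z := t*x+(1-t)*y).
assert (x < z < y) by (unfold z; nra).
destruct (mvt_strict h h1 x z) as [c1 [Hc1 E1]]; try lra.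
{ intros; apply Hd; lra. } { intros; apply Hc; lra. }
destruct (mvt_strict h h1 z y) as [c2 [Hc2 E2]]; try lra.
{ intros; apply Hd; lra. } { intros; apply Hc; lra. }
assert (h1 c2 <= h1 c1) by (apply Hm; lra).
assert (Ez : z - x = (1-t)*(y-x)) by (unfold z; ring).
assert (Ey : y - z = t*(y-x)) by (unfold z; ring).
rewrite Ez in E1. rewrite Ey in E2.
assert (0 <= t*(1-t)*(y-x)) by (apply Rmult_le_pos; nra).
nra.
Qed.

Lemma concave_gen (g h h1 : R->R) (k a b : R) : 0 <= k ->
 (forall r, a<=r<=b -> g r = k * h r) ->
 (forall c, a<=c<=b -> continuity_pt h c) ->
 (forall c, a<c<b -> is_derive h c (h1 c)) ->
 (forall x y, a<x -> x<=y -> y<b -> h1 y <= h1 x) ->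
 forall x y t, a<=x<=b -> a<=y<=b -> 0<=t<=1 -> t*g x + (1-t)*g y <= g (t*x+(1-t)*y).
Proof.
intros Hk Hg Hc Hd Hm x y t Hx Hy Ht.
assert (Hz : a <= t*x+(1-t)*y <= b) by nra.
rewrite !Hg; auto.
destruct (Req_dec t 0) as [->|H0].
{ replace (0*x+(1-0)*y) with y by ring. lra. }
destruct (Req_dec t 1) as [->|H1].
{ replace (1*x+(1-1)*y) with x by ring. lra. }
destruct (Rtotal_order x y) as [Hl|[He|Hl]].
- pose proof (concave_core h h1 a b Hc Hd Hm x y t ltac:(lra) Hl ltac:(lra) ltac:(lra)). nra.
- subst. replace (t*y+(1-t)*y) with y by ring. lra.
- pose proof (concave_core h h1 a b Hc Hd Hm y x (1-t) ltac:(lra) Hl ltac:(lra) ltac:(lra)).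
  replace (t*x+(1-t)*y) with ((1-t)*y+(1-(1-t))*x) by ring. nra.
Qed.

Lemma is_derive_acos x : -1 < x < 1 -> is_derive acos x (-1 / sqrt (1 - x²)).
Proof.
intros Hx. apply is_derive_Reals.
apply (derive_pt_eq_1 _ _ _ (derivable_pt_acos x Hx)).
apply derive_pt_acos.
Qed.

Lemma acos_cont_1 : continuity_pt acos 1.
Proof.
unfold continuity_pt, continue_in, limit1_in, limit_in. simpl. unfold R_dist.
intros eps Heps.
set (e := Rmin eps (PI/2)).
assert (He : 0 < e <= PI /\ e <= eps).
{ pose proof PI_RGT_0. unfold e. split; [split|].
  - apply Rmin_pos; lra. - pose proof (Rmin_r eps (PI/2)); lra. - apply Rmin_l. }
assert (Hce : cos e < 1).
{ rewrite <- cos_0. apply cos_decreasing_1; lra. }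
exists (Rmin 1 (1 - cos e)). split.
{ apply Rmin_pos; lra. }
intros y [_ Hy].
pose proof (Rmin_l 1 (1 - cos e)). pose proof (Rmin_r 1 (1 - cos e)).
rewrite acos_1, Rminus_0_r.
pose proof (acos_bound y).
rewrite Rabs_pos_eq by lra.
destruct (Rle_dec 1 y).
{ unfold acos. destruct (Rle_dec y (-1)); [lra|]. destruct (Rle_dec 1 y); lra. }
assert (Hy2 : cos e < y).
{ apply Rabs_def2 in Hy. lra. }
assert (Hyr : -1 <= y <= 1) by (apply Rabs_def2 in Hy; lra).
destruct (Rlt_le_dec (acos y) e); [lra|].
exfalso. destruct (Req_dec (acos y) e) as [E|E].
- rewrite <- E in Hy2. rewrite cos_acos in Hy2; lra.
- assert (cos (acos y) < cos e) by (apply cos_decreasing_1; lra).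
  rewrite cos_acos in H2; lra.
Qed.

Lemma acos_cont x : -1 < x <= 1 -> continuity_pt acos x.
Proof.
intros Hx. destruct (Req_dec x 1) as [->|Hn].
- apply acos_cont_1.
- apply derivable_continuous_pt, derivable_pt_acos; lra.
Qed.
Definition uu RR d r := (d^2 + r^2 - RR^2)/(2*d*r).
Definition DD RR d r := 4*d^2*r^2 - (d^2+r^2-RR^2)^2.
Definition NN RR d r := r^2 - d^2 + RR^2.
Definition MM RR d r := d^2 - r^2 + RR^2.
Definition hh RR d r := r * acos (uu RR d r).
Definition h1 RR d r := acos (uu RR d r) - NN RR d r / sqrt (DD RR d r).
Definition h2 RR d r :=
  -(NN RR d r * sqrt (DD RR d r)^2 + 2*r^2*(sqrt (DD RR d r)^2 - NN RR d r * MM RR d r))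
   / (r * sqrt (DD RR d r)^3).

Lemma dom RR d r : 0 < RR -> 0 < d -> Rabs (RR - d) < r < d + RR ->
  0 < r /\ 0 < DD RR d r /\ -1 < uu RR d r < 1.
Proof.
intros HR Hd [H1 H2].
apply Rabs_def2 in H1 as [H1a H1b].
assert (Hr : 0 < r) by lra.
assert (Ha : (r-d)^2 - RR^2 < 0) by nra.
assert (Hb : 0 < (r+d)^2 - RR^2) by nra.
split; [auto|split].
- unfold DD. replace (4 * d ^ 2 * r ^ 2 - (d ^ 2 + r ^ 2 - RR ^ 2) ^ 2) with
  (-((r-d)^2 - RR^2) * ((r+d)^2 - RR^2)) by ring. nra.
- unfold uu. assert (0 < 2*d*r) by nra. split.
  + apply Rlt_div_r; [lra|]. nra.
  + apply Rlt_div_l; [lra|]. nra.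
Qed.

Lemma sqrt1u RR d r : 0 < d -> 0 < r -> 0 < DD RR d r ->
  sqrt (1 - (uu RR d r)²) = sqrt (DD RR d r) / (2*d*r).
Proof.
intros Hd Hr HD.
rewrite <- (sqrt_pow2 (sqrt (DD RR d r) / (2*d*r))).
2:{ apply Rdiv_le_0_compat; [apply sqrt_pos|nra]. }
f_equal.
unfold Rdiv. rewrite Rpow_mult_distr, pow2_sqrt by lra.
unfold uu, DD, Rsqr. field. lra.
Qed.

Lemma deriv_acos_u RR d r : 0 < RR -> 0 < d -> Rabs (RR - d) < r < d + RR ->
  is_derive (fun r => acos (uu RR d r)) r (- NN RR d r / (r * sqrt (DD RR d r))).
Proof.
intros HR Hd Hr. destruct (dom RR d r HR Hd Hr) as [Hr0 [HD Hu]].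
assert (Hu' : is_derive (uu RR d) r (NN RR d r / (2*d*r^2))).
{ unfold uu, NN. auto_derive. { nra. } field. lra. }
pose proof (is_derive_comp acos (uu RR d) r _ _ (is_derive_acos _ Hu) Hu') as H.
replace (- NN RR d r / (r * sqrt (DD RR d r))) with (scal (NN RR d r / (2 * d * r ^ 2)) (-1 / sqrt (1 - (uu RR d r)²))).
{ exact H. }
rewrite sqrt1u by lra. unfold scal; simpl; unfold mult; simpl.
assert (0 < sqrt (DD RR d r)) by (apply sqrt_lt_R0; lra).
field. repeat split; lra.
Qed.

Lemma deriv_q RR d r : 0 < RR -> 0 < d -> Rabs (RR - d) < r < d + RR ->
  is_derive (fun r => NN RR d r / sqrt (DD RR d r)) r
   ((2*r*sqrt (DD RR d r)^2 - 2*r*NN RR d r * MM RR d r) / sqrt (DD RR d r)^3).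
Proof.
intros HR Hd Hr. destruct (dom RR d r HR Hd Hr) as [Hr0 [HD Hu]].
unfold NN, DD. auto_derive;
repeat match goal with |- context [sqrt ?X] =>
  lazymatch X with DD _ _ _ => fail | _ =>
  let H := fresh in assert (H: X = DD RR d r) by (unfold DD; ring); rewrite H end end.
{ split; [unfold DD in HD; lra|]. split; [|auto]. apply Rgt_not_eq, sqrt_lt_R0; lra. }
set (s := sqrt (DD RR d r)).
assert (0 < s) by (apply sqrt_lt_R0; lra).
unfold MM. field. lra.
Qed.

Lemma deriv_h RR d r : 0 < RR -> 0 < d -> Rabs (RR - d) < r < d + RR ->
  is_derive (hh RR d) r (h1 RR d r).
Proof.
intros HR Hd Hr. destruct (dom RR d r HR Hd Hr) as [Hr0 [HD Hu]].
pose proof (deriv_acos_u RR d r HR Hd Hr) as H.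
pose proof (is_derive_mult (fun r => r) (fun r => acos (uu RR d r)) r 1 _ (is_derive_id r) H) as H2.
specialize (H2 (fun n m => Rmult_comm n m)).
unfold hh. apply (is_derive_ext (fun x => mult x (acos (uu RR d x)))).
{ intros; reflexivity. }
replace (h1 RR d r) with (plus (mult 1 (acos (uu RR d r))) (mult r (- NN RR d r / (r * sqrt (DD RR d r))))).
{ exact H2. }
assert (0 < sqrt (DD RR d r)) by (apply sqrt_lt_R0; lra).
unfold plus, mult; simpl. unfold h1. field. lra.
Qed.

Lemma deriv_h1 RR d r : 0 < RR -> 0 < d -> Rabs (RR - d) < r < d + RR ->
  is_derive (h1 RR d) r (h2 RR d r).
Proof.
intros HR Hd Hr. destruct (dom RR d r HR Hd Hr) as [Hr0 [HD Hu]].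
pose proof (is_derive_minus _ _ r _ _ (deriv_acos_u RR d r HR Hd Hr) (deriv_q RR d r HR Hd Hr)) as H.
unfold h1. eapply is_derive_ext; [|].
2:{ replace (h2 RR d r) with (minus (- NN RR d r / (r * sqrt (DD RR d r)))
   ((2*r*sqrt (DD RR d r)^2 - 2*r*NN RR d r * MM RR d r) / sqrt (DD RR d r)^3)).
  exact H.
  assert (0 < sqrt (DD RR d r)) by (apply sqrt_lt_R0; lra).
  unfold minus, plus, opp; simpl. unfold h2. field. lra. }
intros; reflexivity.
Qed.

Lemma h2_nonpos RR d r : 0 < RR -> 0 < d -> Rabs (RR - d) < r < d + RR ->
  0 <= d^2 + r^2 - RR^2 -> h2 RR d r <= 0.
Proof.
intros HR Hd Hr HK. destruct (dom RR d r HR Hd Hr) as [Hr0 [HD Hu]].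
assert (Hs : 0 < sqrt (DD RR d r)) by (apply sqrt_lt_R0; lra).
unfold h2. rewrite pow2_sqrt by lra.
set (K := d^2 + r^2 - RR^2).
assert (E : NN RR d r * DD RR d r + 2 * r ^ 2 * (DD RR d r - NN RR d r * MM RR d r)
   = K * (K - 2*r^2)^2 + 2*r^2 * DD RR d r) by (unfold K, NN, DD, MM; ring).
rewrite E. unfold Rdiv.
assert (0 <= K * (K - 2*r^2)^2 + 2*r^2 * DD RR d r).
{ pose proof (pow2_ge_0 (K - 2*r^2)). pose proof (Rmult_le_pos _ _ HK H). pose proof (pow2_ge_0 r). assert (0 <= 2*r^2*DD RR d r) by (apply Rmult_le_pos; lra). unfold K in *. lra. }
assert (0 < / (r * sqrt (DD RR d r) ^ 3)).
{ apply Rinv_0_lt_compat. apply Rmult_lt_0_compat; [lra|]. apply pow_lt; lra. }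
nra.
Qed.

Lemma hh_cont RR d c : 0 < RR -> 0 < d -> d - RR <= c <= d + RR ->
  (c = 0 \/ (0 < c /\ RR - d < c)) -> continuity_pt (hh RR d) c.
Proof.
intros HR Hd Hc [->|[Hc0 Hc1]].
- unfold continuity_pt, continue_in, limit1_in, limit_in. simpl. unfold R_dist.
  intros eps Heps. pose proof PI_RGT_0.
  exists (eps / PI). split; [apply Rdiv_lt_0_compat; lra|].
  intros y [_ Hy]. unfold hh. rewrite Rmult_0_l, Rminus_0_r. rewrite Rminus_0_r in Hy.
  rewrite Rabs_mult. pose proof (acos_bound (uu RR d y)).
  rewrite (Rabs_pos_eq (acos _)) by lra.
  assert (Rabs y * PI < eps).
  { apply Rlt_div_r in Hy; lra. }
  pose proof (Rabs_pos y). nra.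
- unfold hh. apply continuity_pt_mult; [apply derivable_continuous_pt, derivable_pt_id|].
  apply (continuity_pt_comp (uu RR d) acos).
  + apply derivable_continuous_pt. exists (NN RR d c / (2*d*c^2)). apply is_derive_Reals.
    unfold uu, NN. auto_derive. { nra. } field. lra.
  + apply acos_cont. unfold uu. assert (0 < 2*d*c) by nra. split.
    * apply Rlt_div_r; [lra|]. nra.
    * apply Rle_div_l; [lra|]. nra.
Qed.

Theorem propositionB1 (RR : R) (hR : 0 < RR) :
  (forall d : R, 0 <= d ->
     concave_on (fun r => prof_support RR d r /\ RR <= r) (f_prof RR d)) /\
  (forall d : R, RR <= d ->
     concave_on (prof_support RR d) (f_prof RR d)).
Proof.
pose proof PI_RGT_0 as HPI.
assert (Hk : 0 <= 2 / (PI * RR^2)).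
{ apply Rlt_le, Rdiv_lt_0_compat; [lra|]. apply Rmult_lt_0_compat; [lra|]. apply pow_lt; lra. }
split.
- intros d Hd0 x y t [[Hx1 [Hx2 Hx3]] Hx4] [[Hy1 [Hy2 Hy3]] Hy4] Ht.
  destruct (Req_dec d 0) as [->|Hdn].
  { assert (x = RR) by lra. assert (y = RR) by lra. subst.
    replace (t*RR+(1-t)*RR) with RR by ring. lra. }
  assert (Hd : 0 < d) by lra.
  set (a := Rmax RR (d - RR)).
  assert (Ha1 : RR <= a) by apply Rmax_l.
  assert (Ha2 : d - RR <= a) by apply Rmax_r.
  apply (concave_gen (f_prof RR d) (hh RR d) (h1 RR d) (2 / (PI * RR^2)) a (d+RR)); auto.
  + intros r Hr. unfold f_prof.
    destruct (Rle_dec r (RR - d)); [lra|].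
    destruct (Rlt_dec (RR + d) r); [lra|].
    destruct (Rlt_dec r (d - RR)); [lra|].
    unfold hh, uu. unfold Rdiv. ring.
  + intros c Hc. apply hh_cont; auto; lra.
  + intros c Hc. apply deriv_h; auto. split; [|lra]. apply Rabs_def1; lra.
  + apply (mono_from_deriv _ (h2 RR d)).
    * intros c Hc. apply deriv_h1; auto. split; [|lra]. apply Rabs_def1; lra.
    * intros c Hc. apply h2_nonpos; auto.
      { split; [|lra]. apply Rabs_def1; lra. }
      assert (RR^2 <= c^2) by (apply pow_incr; lra). pose proof (pow2_ge_0 d). lra.
  + split; [apply Rmax_lub|]; lra.
  + split; [apply Rmax_lub|]; lra.
- intros d HdR x y t [Hx1 [Hx2 Hx3]] [Hy1 [Hy2 Hy3]] Ht.
  assert (Hd : 0 < d) by lra.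
  apply (concave_gen (f_prof RR d) (hh RR d) (h1 RR d) (2 / (PI * RR^2)) (d - RR) (d+RR)); auto.
  + intros r Hr. unfold f_prof.
    destruct (Rle_dec r (RR - d)).
    { assert (r = 0) by lra. subst r. unfold hh. unfold Rdiv. ring. }
    destruct (Rlt_dec (RR + d) r); [lra|].
    destruct (Rlt_dec r (d - RR)); [lra|].
    unfold hh, uu. unfold Rdiv. ring.
  + intros c Hc. apply hh_cont; auto.
    destruct (Req_dec c 0); [left; auto|right; lra].
  + intros c Hc. apply deriv_h; auto. split; [|lra]. apply Rabs_def1; lra.
  + apply (mono_from_deriv _ (h2 RR d)).
    * intros c Hc. apply deriv_h1; auto. split; [|lra]. apply Rabs_def1; lra.
    * intros c Hc. apply h2_nonpos; auto.
      { split; [|lra]. apply Rabs_def1; lra. }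
      assert (RR^2 <= d^2) by (apply pow_incr; lra). pose proof (pow2_ge_0 c). lra.
Qed.
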